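(* Let $m$ be a positive integer, $n=2^m$, and let $v\in\{\pm1\}^n$ have at most $\ell$ sign changes. Then $$\sum_{i\in\mathcal{T}}\ \sum_{j=0}^{2^i-1}2^{-(m-i)/2}\,\big|\langle\psi_{i,j},v\rangle\big|\le \ell\log_2 n+1,$$ where $\mathcal{T}=\{0_{\mathrm{father}},0_{\mathrm{mother}},1,\dots,m-1\}$ and the indices $0_{\mathrm{father}},0_{\mathrm{mother}}$ are given the numerical value $0$ in the summation range and in the weight $2^{-(m-i)/2}$.
   Context: A vector $v\in\{\pm1\}^n$ has at most $\ell$ sign changes if there are at most $\ell$ indices $i\in[n-1]$ with $v_{i+1}\ne v_i$. The Haar wavelet basis of $\mathbb{R}^n$ ($n=2^m$) is the orthonormal basis consisting of the father wavelet $\psi_{0_{\mathrm{father}},0}=n^{-1/2}(1,\dots,1)$, the mother wavelet $\psi_{0_{\mathrm{mother}},0}=n^{-1/2}(1,\dots,1,-1,\dots,-1)$ (with $n/2$ entries $1$ followed by $n/2$ entries $-1$), and, for every $1\le i<m$ and $0\le j<2^i$, the wavelet $\psi_{i,j}$ whose coordinates $2^{m-i}j+1,\dots,2^{m-i}j+2^{m-i-1}$ equal $2^{-(m-i)/2}$, whose coordinates $2^{m-i}j+2^{m-i-1}+1,\dots,2^{m-i}j+2^{m-i}$ equal $-2^{-(m-i)/2}$, and whose other coordinates are $0$. *)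

(* Defs.v *)
From HB Require Import structures.
From mathcomp Require Import all_boot all_order all_algebra.
Set Implicit Arguments. Unset Strict Implicit. Unset Printing Implicit Defensive.
Import Order.TTheory GRing.Theory Num.Theory.
Local Open Scope ring_scope.

(* Coordinates are 0-based: coordinate k : 'I_n corresponds to the paper's k+1. *)

Definition sign_changes (R : eqType) (n : nat) (v : 'I_n -> R) : nat :=
  #|[set i : 'I_n | [exists j : 'I_n, (val j == (val i).+1)%N && (v i != v j)]]|.

Definition is_pm1 (R : pzRingType) (n : nat) (v : 'I_n -> R) : Prop :=
  forall k, v k = 1 \/ v k = -1.

Definition haar_father (R : rcfType) (m : nat) (k : 'I_(2 ^ m)) : R :=
  (Num.sqrt ((2 ^ m)%N%:R))^-1.

Definition haar_mother (R : rcfType) (m : nat) (k : 'I_(2 ^ m)) : R :=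
  if (val k < (2 ^ m)./2)%N then (Num.sqrt ((2 ^ m)%N%:R))^-1
  else - (Num.sqrt ((2 ^ m)%N%:R))^-1.

Definition haar_psi (R : rcfType) (m i j : nat) (k : 'I_(2 ^ m)) : R :=
  let s := (2 ^ (m - i))%N in
  let c := (Num.sqrt (s%:R))^-1 in
  if ((j * s <= val k) && (val k < j * s + s./2))%N then c
  else if ((j * s + s./2 <= val k) && (val k < j * s + s))%N then - c
  else 0.

Definition ip (R : pzRingType) (n : nat) (u v : 'I_n -> R) : R :=
  \sum_(k < n) u k * v k.

Definition haar_weight (R : rcfType) (m i : nat) : R :=
  (Num.sqrt ((2 ^ (m - i))%N%:R))^-1.

Definition haar_weighted_sum (R : rcfType) (m : nat) (v : 'I_(2 ^ m) -> R) : R :=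
  haar_weight R m 0 * `|ip (@haar_father R m) v|
  + haar_weight R m 0 * `|ip (@haar_mother R m) v|
  + \sum_(1 <= i < m) \sum_(0 <= j < 2 ^ i) haar_weight R m i * `|ip (@haar_psi R m i j) v|.

(* Main.v *)
Require Import Defs.
From HB Require Import structures.
From mathcomp Require Import all_boot all_order all_algebra.
From mathcomp Require Import zify ring lra.
Import Order.TTheory GRing.Theory Num.Theory.
Set Implicit Arguments. Unset Strict Implicit.
Local Open Scope ring_scope.

Section Blk.
Variable R : rcfType.

Definition blk (a h : nat) (c : R) (k : nat) : R :=
  if ((a <= k) && (k < a + h))%N then c
  else if ((a + h <= k) && (k < a + h + h))%N then - c else 0.

Lemma sum_blk (n a h : nat) (c : R) (w : nat -> R) : (a + h + h <= n)%N ->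
  \sum_(0 <= k < n) blk a h c k * w k =
  c * (\sum_(a <= k < a + h) w k - \sum_(a + h <= k < a + h + h) w k).
Proof.
move=> Hn.
have h1 : (a <= a + h)%N by lia.
have h2 : (a + h <= a + h + h)%N by lia.
have h0 : (a <= n)%N by lia.
have h3 : (a + h <= n)%N by lia.
rewrite (big_cat_nat _ (n := a)) //= (big_cat_nat _ (n := a + h) (m := a)) //=.
rewrite (big_cat_nat _ (n := a + h + h) (m := a + h)) //=.
rewrite big1_seq; last first.
  move=> k; rewrite mem_index_iota /blk => Hk.
  have -> : ((a <= k) && (k < a + h))%N = false by lia.
  have -> : ((a + h <= k) && (k < a + h + h))%N = false by lia.
  by rewrite mul0r.
rewrite [X in _ + (_ + (_ + X))]big1_seq; last first.
  move=> k; rewrite mem_index_iota /blk => Hk.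
  have -> : ((a <= k) && (k < a + h))%N = false by lia.
  have -> : ((a + h <= k) && (k < a + h + h))%N = false by lia.
  by rewrite mul0r.
rewrite add0r addr0 mulrBr !mulr_sumr -sumrN.
congr (_ + _); apply: eq_big_nat => k Hk; rewrite /blk.
  by have -> : ((a <= k) && (k < a + h))%N = true by lia.
have -> : ((a <= k) && (k < a + h))%N = false by lia.
have -> : ((a + h <= k) && (k < a + h + h))%N = true by lia.
by rewrite mulNr.
Qed.

Lemma sum_abs_le (a b : nat) (w : nat -> R) : (forall k, `|w k| <= 1) ->
  `|\sum_(a <= k < b) w k| <= (b - a)%:R.
Proof.
move=> Hw; apply: le_trans (ler_norm_sum _ _ _) _.
apply: le_trans (_ : \sum_(a <= k < b) (1:R) <= _).
  by apply: ler_sum => k _; apply: Hw.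
by rewrite sumr_const_nat.
Qed.

Lemma csq (s : nat) : (0 < s)%N ->
  (Num.sqrt (s%:R : R))^-1 * (Num.sqrt (s%:R : R))^-1 = (s%:R)^-1.
Proof.
move=> Hs; rewrite -invfM -expr2 sqr_sqrtr // ler0n //.
Qed.

Lemma blk_bound (a h : nat) (w : nat -> R) (c : R) : (0 < h)%N ->
  (forall k, `|w k| <= 1) -> c = (Num.sqrt ((h + h)%N%:R : R))^-1 ->
  c * `| c * (\sum_(a <= k < a + h) w k - \sum_(a + h <= k < a + h + h) w k)| <= 1.
Proof.
move=> Hh Hw ->.
have c0 : 0 <= (Num.sqrt ((h + h)%N%:R : R))^-1 by rewrite invr_ge0 sqrtr_ge0.
rewrite normrM (ger0_norm c0) mulrA csq; last by lia.
have Hs : 0 < ((h + h)%N%:R : R) by rewrite ltr0n; lia.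
rewrite ler_pdivrMl // mulr1.
apply: le_trans (ler_normB _ _) _.
have H1 := sum_abs_le a (a + h) Hw.
have H2 := sum_abs_le (a + h) (a + h + h) Hw.
have E1 : (a + h - a = h)%N by lia.
rewrite E1 in H1.
have E : (a + h + h - (a + h) = h)%N by lia.
rewrite E in H2.
by rewrite natrD; apply: lerD.
Qed.

Lemma blk_const (a h : nat) (w : nat -> R) :
  (forall k, (a <= k)%N -> (k.+1 < a + h + h)%N -> w k = w k.+1) ->
  \sum_(a <= k < a + h) w k - \sum_(a + h <= k < a + h + h) w k = 0.
Proof.
move=> Hc.
have E : forall k, (a <= k < a + h + h)%N -> w k = w a.
  move=> k; elim: k => [|k IH] Hk.
    by have -> : a = 0%N by lia.
  case: (ltnP a k.+1) => Hak.
    rewrite -Hc; first by apply: IH; lia.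
    by lia. by lia.
  by have -> : a = k.+1 by lia.
rewrite (eq_big_nat _ _ (F2 := fun _ => w a)); last by move=> k Hk; apply: E; lia.
rewrite [X in _ - X](eq_big_nat _ _ (F2 := fun _ => w a)); last by move=> k Hk; apply: E; lia.
rewrite !sumr_const_nat.
have -> : (a + h - a = a + h + h - (a + h))%N by lia.
by rewrite subrr.
Qed.
End Blk.

Section Main.
Variable R : rcfType.
Variable m : nat.
Variable v : 'I_(2 ^ m) -> R.
Hypothesis Hv : is_pm1 v.

Definition wext (k : nat) : R :=
  if (insub k : option 'I_(2 ^ m)) is Some o then v o else 0.

Lemma wextE (o : 'I_(2 ^ m)) : wext (val o) = v o.
Proof. by rewrite /wext valK. Qed.

Lemma wext_le k : `|wext k| <= 1.
Proof.
rewrite /wext; case: insub => [o|]; last by rewrite normr0 ler01.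
by case: (Hv o) => ->; rewrite ?normrN normr1.
Qed.

Lemma ip_nat (f : 'I_(2 ^ m) -> R) (F : nat -> R) :
  (forall k, f k = F (val k)) ->
  ip f v = \sum_(0 <= k < 2 ^ m) F k * wext k.
Proof.
move=> Hf; rewrite big_mkord /ip; apply: eq_bigr => k _.
by rewrite Hf wextE.
Qed.

Definition chg : {set 'I_(2 ^ m)} :=
  [set i : 'I_(2 ^ m) | [exists j : 'I_(2 ^ m), (val j == (val i).+1)%N && (v i != v j)]].

Lemma chgE : sign_changes v = #|chg|.
Proof. by []. Qed.

Lemma term_le i j : (i < m)%N -> (j < 2 ^ i)%N ->
  haar_weight R m i * `|ip (@haar_psi R m i j) v| <=
  (\sum_(o in chg | (val o %/ 2 ^ (m - i) == j)%N) 1)%N%:R.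
Proof.
move=> Him Hj.
set h := (2 ^ (m - i).-1)%N.
have Es : (2 ^ (m - i) = h + h)%N.
  by rewrite /h addnn -mul2n -expnS prednK // subn_gt0.
have Hh : (0 < h)%N by rewrite /h expn_gt0.
have Ep : forall k, @haar_psi R m i j k = blk (j * (h + h)) h (Num.sqrt ((h + h)%N%:R))^-1 (val k).
  move=> k; rewrite /haar_psi /blk Es addnn doubleK -addnn addnA //.
have Hn : (j * (h + h) + h + h <= 2 ^ m)%N.
  have -> : (2 ^ m = 2 ^ i * (h + h))%N by rewrite -Es -expnD subnKC // ltnW.
  by rewrite -addnA -mulSnr leq_mul2r Hj orbT.
rewrite (ip_nat Ep) (sum_blk _ _ Hn) /haar_weight Es.
set a := (j * (h + h))%N.
case: (boolP [exists o, (o \in chg) && (val o %/ 2 ^ (m - i) == j)%N]).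
  move/existsP => [o Ho].
  apply: le_trans (blk_bound a Hh wext_le (erefl _)) _.
  rewrite Es in Ho.
  rewrite ler1n (bigD1 o) //=; lia.
move/existsP => Hno.
rewrite blk_const ?mulr0 ?normr0 ?mulr0 ?ler0n //.
move=> k Hak Hk.
have Hk1 : (k < 2 ^ m)%N by lia.
have Hk2 : (k.+1 < 2 ^ m)%N by lia.
pose o := Ordinal Hk1; pose o' := Ordinal Hk2.
have Ho : ~~ (o \in chg).
  apply/negP => Hoc; apply: Hno; exists o; rewrite Hoc /=.
  rewrite Es eqn_leq leq_divRL ?ltn_divLR; try lia.
  apply/andP; split; rewrite /a in Hak Hk; nia.
move: Ho; rewrite inE => /existsP Hno2.
have := wextE o; have := wextE o'; rewrite /= => -> ->.
apply/eqP; apply/negP => Hne; apply: Hno2; exists o'; rewrite /= eqxx /=.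
by apply/negP.
Qed.

Lemma level_le i : (i < m)%N ->
  \sum_(0 <= j < 2 ^ i) haar_weight R m i * `|ip (@haar_psi R m i j) v| <= (#|chg|)%:R.
Proof.
move=> Him.
apply: le_trans (_ : \sum_(0 <= j < 2 ^ i)
   ((\sum_(o in chg | (val o %/ 2 ^ (m - i) == j)%N) 1)%N)%:R <= _).
  by rewrite !big_mkord; apply: ler_sum => j _; apply: term_le.
rewrite -natr_sum ler_nat big_mkord.
have Hd : forall o : 'I_(2 ^ m), (val o %/ 2 ^ (m - i) < 2 ^ i)%N.
  move=> o; rewrite ltn_divLR ?expn_gt0 // -expnD subnKC; [exact: ltn_ord | exact: ltnW].
pose p o := Ordinal (Hd o).
rewrite -sum1_card (partition_big p xpredT); last by move=> o.
apply/eq_leq/eq_bigr => j _; apply: eq_bigl => o.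
by rewrite -val_eqE.
Qed.
Lemma father_le : (0 < m)%N ->
  haar_weight R m 0 * `|ip (@haar_father R m) v| <= 1.
Proof.
move=> Hm.
rewrite (@ip_nat _ (fun _ => (Num.sqrt ((2 ^ m)%N%:R))^-1)) // -mulr_sumr.
rewrite /haar_weight subn0.
have c0 : 0 <= (Num.sqrt ((2 ^ m)%N%:R : R))^-1 by rewrite invr_ge0 sqrtr_ge0.
rewrite normrM (ger0_norm c0) mulrA csq ?expn_gt0 //.
have Hs : 0 < ((2 ^ m)%N%:R : R) by rewrite ltr0n expn_gt0.
rewrite ler_pdivrMl // mulr1.
by have := sum_abs_le 0 (2 ^ m) wext_le; rewrite subn0.
Qed.

Lemma mother_eq : haar_weight R m 0 * `|ip (@haar_mother R m) v| =
  \sum_(0 <= j < 2 ^ 0) haar_weight R m 0 * `|ip (@haar_psi R m 0 j) v|.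
Proof.
rewrite big_nat1 /ip; congr (_ * `|_|); apply: eq_bigr => k _; congr (_ * _).
rewrite /haar_mother /haar_psi subn0 mul0n !add0n /=.
case: (ltnP k ((2 ^ m)./2)) => H; first reflexivity.
rewrite (ltn_ord k); reflexivity.
Qed.

End Main.

Unset Implicit Arguments. Set Strict Implicit.

Theorem lemma6p6 (R : rcfType) (m l : nat) (v : 'I_(2 ^ m) -> R) :
  (0 < m)%N -> is_pm1 v -> (sign_changes v <= l)%N ->
  @haar_weighted_sum R m v <= l%:R * m%:R + 1.
Proof.
move=> Hm Hv Hl.
rewrite /haar_weighted_sum -addrA (mother_eq v).
rewrite -(big_ltn (F := fun i => \sum_(0 <= j < 2 ^ i)
   haar_weight R m i * `|ip (@haar_psi R m i j) v|)) //.
rewrite addrC; apply: lerD; last exact: father_le.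
apply: le_trans (_ : \sum_(0 <= i < m) (l%:R : R) <= _).
  rewrite !big_mkord; apply: ler_sum => i _.
  apply: le_trans (level_le Hv (ltn_ord i)) _.
  by rewrite ler_nat -chgE.
by rewrite sumr_const_nat subn0 mulr_natr.
Qed.
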